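(* Let $K\ge 1$ be an integer, $\mathcal{I}=\{1,\dots,K\}$, and let $\lambda_i>0$, $\gamma_{ui}>0$, $\gamma_{di}>0$, $\widetilde{\gamma}_{ui}>0$, $\widetilde{\gamma}_{di}>0$ ($i\in\mathcal{I}$) be given, together with asset proportions $m_i>0$ ($i\in\mathcal{I}$) satisfying $\sum_{i\in\mathcal{I}}m_i<1$. Let $E=\{(l,n)\}\cup\{(hi,n),(hi,o),(li,o): i\in\mathcal{I}\}$. Then there exists a unique function $\mu:E\to[0,\infty)$ (a steady state of the partially segmented market) satisfying, for all $i\in\mathcal{I}$, \[0=-\lambda_i\mu(hi,n)\mu(li,o)+\widetilde{\gamma}_{ui}\mu(l,n)-\widetilde{\gamma}_{di}\mu(hi,n),\] \[0=-\lambda_i\mu(hi,n)\mu(li,o)-\gamma_{ui}\mu(li,o)+\gamma_{di}\mu(hi,o),\] together with the constraints \[\mu(hi,o)+\mu(li,o)=m_i\ \ (i\in\mathcal{I}),\qquad \sum_{i\in\mathcal{I}}m_i+\sum_{i\in\mathcal{I}}\mu(hi,n)+\mu(l,n)=1.\]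
   Context: This is the stationary version of the partially segmented over-the-counter market model: $\mu(z)$ is the proportion of investors in state $z\in E$, where $(l,n)$ denotes low liquidity-type investors owning no asset, $(hi,n)$ high-type investors owning no asset and seeking to buy asset $i$, and $(hi,o)$/$(li,o)$ high/low-type investors owning asset $i$. The time-dependent dynamics are $\dot\mu_t(hi,n)=-\lambda_i\mu_t(hi,n)\mu_t(li,o)+\widetilde{\gamma}_{ui}\mu_t(l,n)-\widetilde{\gamma}_{di}\mu_t(hi,n)$ and $\dot\mu_t(li,o)=-\lambda_i\mu_t(hi,n)\mu_t(li,o)-\gamma_{ui}\mu_t(li,o)+\gamma_{di}\mu_t(hi,o)$ under the stated constraints; a steady state is a solution with zero time derivative. *)

(* Defs.v *)
From mathcomp Require Import all_boot all_order all_algebra.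
From mathcomp Require Import reals.
Set Implicit Arguments. Unset Strict Implicit. Unset Printing Implicit Defensive.
Import Order.TTheory GRing.Theory Num.Theory.
Local Open Scope ring_scope.

(* The state space E = {(l,n)} ∪ {(hi,n),(hi,o),(li,o) : i ∈ I}, I = 'I_K
   (index i : 'I_K stands for asset i+1). *)
Inductive state (K : nat) : Type :=
  | st_ln : state K
  | st_hn : 'I_K -> state K
  | st_ho : 'I_K -> state K
  | st_lo : 'I_K -> state K.

Definition is_steady_state (R : realType) (K : nat)
  (lam gu gd gtu gtd m : 'I_K -> R) (mu : state K -> R) : Prop :=
  (forall z, 0 <= mu z) /\
  (forall i : 'I_K,
      0 = - (lam i * mu (st_hn i) * mu (st_lo i)) + gtu i * mu (st_ln K)
          - gtd i * mu (st_hn i)) /\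
  (forall i : 'I_K,
      0 = - (lam i * mu (st_hn i) * mu (st_lo i)) - gu i * mu (st_lo i)
          + gd i * mu (st_ho i)) /\
  (forall i : 'I_K, mu (st_ho i) + mu (st_lo i) = m i) /\
  (\sum_(i < K) m i + \sum_(i < K) mu (st_hn i) + mu (st_ln K) = 1).

(* Main.v *)
Require Import Defs.
From mathcomp Require Import all_boot all_order all_algebra.
From mathcomp Require Import ring lra.
From mathcomp Require Import reals.
From mathcomp Require Import all_classical all_reals all_analysis.
Import Order.TTheory GRing.Theory Num.Theory numFieldNormedType.Exports.
Local Open Scope classical_set_scope.
Local Open Scope ring_scope.

Definition hf {R : realType} (lam gu gd gtu gtd m L : R) : R :=
  let c := gu + gd in let a := gtd * lam in
  let b := lam * gd * m + gtd * c - gtu * lam * L in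
  (- b + Num.sqrt (b ^+ 2 + 4 * a * gtu * c * L)) * (2 * a)^-1.

Lemma lin_cont {R : realType} (B C : R) : forall y : R, (fun L : R => B - C * L) @ y --> B - C * y.
Proof.
  move=> y; apply: cvgD; first exact: cvg_cst.
  apply: cvgN; apply: cvgM; [exact: cvg_cst| exact: cvg_id].
Qed.

Lemma hf_cont (R : realType) (lam gu gd gtu gtd m : R) :
  continuous (hf lam gu gd gtu gtd m).
Proof.
pose B := lam * gd * m + gtd * (gu + gd).
pose C := gtu * lam.
pose Q := 4 * (gtd * lam) * gtu * (gu + gd).
pose A := (2 * (gtd * lam))^-1.
have -> : hf lam gu gd gtu gtd m
  = (fun L : R => (- (B - C*L) + Num.sqrt ((B - C*L)^+2 + Q*L)) * A).
  by apply: funext => L; rewrite /hf /B /C /Q /A mulrA.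
move=> x.
have hl := lin_cont B C.
apply: cvgM; last exact: cvg_cst.
apply: cvgD; first exact: (cvgN (hl x)).
apply: (continuous_comp (f := fun L => (B - C * L) ^+ 2 + Q * L)); last exact: sqrt_continuous.
apply: cvgD; last by apply: cvgM; [exact: cvg_cst| exact: cvg_id].
by apply: cvgM; apply: hl.
Qed.

Lemma sum_cont (R : realType) (I : Type) (s : seq I) (F : I -> R -> R) :
  (forall i, continuous (F i)) -> continuous (fun L => \sum_(i <- s) F i L).
Proof.
move=> hF; elim: s => [|j s IH].
  have -> : (fun L => \sum_(i <- [::]) F i L) = fun=> (0 : R).
    by apply: funext => L; rewrite big_nil.
  exact: cst_continuous.
have -> : (fun L => \sum_(i <- j :: s) F i L) = (fun L => F j L + \sum_(i <- s) F i L).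
  by apply: funext => L; rewrite big_cons.
move=> x; apply: cvgD; [exact: hF | exact: IH].
Qed.

Lemma hf_spec (R : realType) (lam gu gd gtu gtd m L : R) :
  0 < lam -> 0 < gu -> 0 < gd -> 0 < gtu -> 0 < gtd -> 0 < m -> 0 <= L ->
  let h := hf lam gu gd gtu gtd m L in
  0 <= h /\ (gtd * lam) * h ^+ 2 + (lam * gd * m + gtd * (gu + gd) - gtu * lam * L) * h
            - gtu * (gu + gd) * L = 0.
Proof.
move=> hl hu hd htu htd hm hL h.
set a := gtd * lam. set b := lam * gd * m + gtd * (gu + gd) - gtu * lam * L.
set k := gtu * (gu + gd) * L.
have ha : 0 < a by rewrite /a mulr_gt0.
set D := b ^+ 2 + 4 * a * gtu * (gu + gd) * L.
have hD : 0 <= D.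
  rewrite /D; apply: addr_ge0; first exact: sqr_ge0.
  apply: mulr_ge0 => //; apply: mulr_ge0; last by apply: addr_ge0; apply: ltW.
  by apply: mulr_ge0; [apply: mulr_ge0 => //; apply: ltW|apply: ltW].
set s := Num.sqrt D.
have hs0 : 0 <= s by apply: sqrtr_ge0.
have hs2 : s ^+ 2 = D by rewrite sqr_sqrtr.
have hsb : `|b| <= s.
  rewrite -(ger0_norm hs0) -ler_sqr ?normr_ge0 // !real_normK ?num_real //.
  rewrite hs2 /D lerDl; apply: mulr_ge0 => //; apply: mulr_ge0; last by apply: addr_ge0; apply: ltW.
  by apply: mulr_ge0; [apply: mulr_ge0 => //; apply: ltW|apply: ltW].
have eh : h * (2 * a) = - b + s.
  rewrite /h /hf -/a -/b -/D -/s -mulrA mulVf ?mulr1 //.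
  by rewrite mulf_neq0 // ?gt_eqF.
split.
  have : 0 <= - b + s.
    by rewrite addrC subr_ge0; apply: le_trans hsb; apply: ler_norm.
  rewrite -eh pmulr_lge0 //; rewrite mulr_gt0 //.
have e4 : (4 * a) * (a * h ^+ 2 + b * h - k) = 0.
  have -> : (4 * a) * (a * h ^+ 2 + b * h - k) = (h * (2 * a)) ^+ 2 + 2 * b * (h * (2 * a)) - 4 * a * k.
    by rewrite /GRing.exp /=; ring.
  rewrite eh; have -> : (- b + s) ^+ 2 + 2 * b * (- b + s) - 4 * a * k = s ^+ 2 - D.
    by rewrite /D /k /GRing.exp /=; ring.
  by rewrite hs2 subrr.
by move/eqP: e4; rewrite mulf_eq0 (gt_eqF (mulr_gt0 _ ha)) /=; [move/eqP|rewrite ltr0n].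
Qed.
Arguments hf_spec {R lam gu gd gtu gtd m L}.


Lemma hf0 (R : realType) (lam gu gd gtu gtd m : R) :
  0 < lam -> 0 < gu -> 0 < gd -> 0 < gtu -> 0 < gtd -> 0 < m ->
  hf lam gu gd gtu gtd m 0 = 0.
Proof.
move=> hl hu hd htu htd hm; rewrite /hf !mulr0 subr0 addr0 sqrtr_sqr ger0_norm ?addNr ?mul0r //.
apply: addr_ge0; first by apply: mulr_ge0; [apply: mulr_ge0|]; apply: ltW.
by apply: mulr_ge0; [|apply: addr_ge0]; apply: ltW.
Qed.

Lemma mono (R : realType) (lam gu gd gtu gtd m h o L h' o' L' : R) :
  0 < lam -> 0 < gu -> 0 < gd -> 0 < gtu -> 0 < gtd -> 0 < m ->
  0 <= h -> 0 <= o -> 0 <= h' -> 0 <= o' ->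
  o * (lam * h + gu + gd) = gd * m -> gtu * L - gtd * h = gd * m - (gu + gd) * o ->
  o' * (lam * h' + gu + gd) = gd * m -> gtu * L' - gtd * h' = gd * m - (gu + gd) * o' ->
  L <= L' -> h <= h'.
Proof.
move=> hl hu hd htu htd hm h0 o0 h0' o0' A B A' B' LL.
rewrite leNgt; apply/negP => hh.
have oo : o <= o'.
  rewrite leNgt; apply/negP => oo.
  have p0 : 0 < lam * h' + gu + gd.
    have : 0 <= lam * h' by apply: mulr_ge0 => //; apply: ltW.
    lra.
  have p1 : o' * (lam * h' + gu + gd) < o * (lam * h' + gu + gd) by rewrite ltr_pM2r.
  have p3 : lam * h' <= lam * h by rewrite ler_wpM2l // ?ltW.
  have p2 : o * (lam * h' + gu + gd) <= o * (lam * h + gu + gd).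
    by rewrite ler_wpM2l //; lra.
  have : o' * (lam * h' + gu + gd) < o * (lam * h + gu + gd) by apply: lt_le_trans p2.
  by rewrite A A' ltxx.
nra.
Qed.
Arguments mono {R lam gu gd gtu gtd m h o L h' o' L'}.


Lemma derive (R : realType) (K : nat) (lam gu gd gtu gtd m : 'I_K -> R) mu i :
  is_steady_state lam gu gd gtu gtd m mu ->
  mu (st_lo i) * (lam i * mu (st_hn i) + gu i + gd i) = gd i * m i /\
  gtu i * mu (st_ln K) - gtd i * mu (st_hn i) = gd i * m i - (gu i + gd i) * mu (st_lo i).
Proof.
move=> [_ [e1 [e2 [e3 _]]]]; have := e1 i; have := e2 i; have := e3 i.
move=> E3 E2 E1.
have E3' : mu (st_ho i) = m i - mu (st_lo i) by rewrite -E3 addrK.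
rewrite E3' in E2.
split; nra.
Qed.
Arguments derive {R K lam gu gd gtu gtd m mu} i.


Lemma uniq_le (R : realType) (K : nat) (lam gu gd gtu gtd m : 'I_K -> R)
  (hlam : forall i, 0 < lam i) (hgu : forall i, 0 < gu i)
  (hgd : forall i, 0 < gd i) (hgtu : forall i, 0 < gtu i)
  (hgtd : forall i, 0 < gtd i) (hm : forall i, 0 < m i) mu1 mu2 :
  is_steady_state lam gu gd gtu gtd m mu1 ->
  is_steady_state lam gu gd gtu gtd m mu2 ->
  mu1 (st_ln K) <= mu2 (st_ln K) -> mu1 = mu2.
Proof.
move=> P1 P2 LL.
have P1' := P1; have P2' := P2.
case: P1' => [n1 [_ [_ [c1 s1]]]]; case: P2' => [n2 [_ [_ [c2 s2]]]].
have MO : forall (mu mu' : state K -> R) i,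
  is_steady_state lam gu gd gtu gtd m mu -> is_steady_state lam gu gd gtu gtd m mu' ->
  mu (st_ln K) <= mu' (st_ln K) -> mu (st_hn i) <= mu' (st_hn i).
  move=> mu mu' i Pa Pb Lab.
  have [A B] := derive i Pa; have [A' B'] := derive i Pb.
  case: Pa => na _; case: Pb => nb _.
  exact: (mono (hlam i) (hgu i) (hgd i) (hgtu i) (hgtd i) (hm i) (na _) (na _) (nb _) (nb _) A B A' B' Lab).
have hle : \sum_(i < K) mu1 (st_hn i) <= \sum_(i < K) mu2 (st_hn i).
  by apply: ler_sum => i _; apply: MO.
have eL : mu1 (st_ln K) = mu2 (st_ln K).
  apply: le_anti; rewrite LL /=; lra.
have eh : forall i, mu1 (st_hn i) = mu2 (st_hn i).
  move=> i; apply: le_anti; apply/andP; split; first exact: MO.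
  by apply: MO => //; rewrite eL.
have eo : forall i, mu1 (st_lo i) = mu2 (st_lo i).
  move=> i; have [A _] := derive i P1; have [A' _] := derive i P2.
  rewrite -A' eh in A; apply: (mulIf _ A).
  have := hlam i; have := hgu i; have := hgd i; have := n2 (st_hn i).
  move=> *; rewrite gt_eqF //; nra.
apply: funext => -[| i | i | i] //.
- by have := c1 i; have := c2 i; rewrite eo => <- /addIr.
Qed.
Arguments uniq_le {R K lam gu gd gtu gtd m} hlam hgu hgd hgtu hgtd hm {mu1 mu2}.


Theorem proposition2 (R : realType) (K : nat) (hK : (1 <= K)%N)
  (lam gu gd gtu gtd m : 'I_K -> R)
  (hlam : forall i, 0 < lam i) (hgu : forall i, 0 < gu i)
  (hgd : forall i, 0 < gd i) (hgtu : forall i, 0 < gtu i)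
  (hgtd : forall i, 0 < gtd i) (hm : forall i, 0 < m i)
  (hsum : \sum_(i < K) m i < 1) :
  exists! mu : state K -> R, is_steady_state lam gu gd gtu gtd m mu.
Proof.
pose H i L := hf (lam i) (gu i) (gd i) (gtu i) (gtd i) (m i) L.
pose G L := L + \sum_(i < K) H i L.
pose S := 1 - \sum_(i < K) m i.
have S0 : 0 <= S by rewrite /S subr_ge0 ltW.
have Gc : continuous G.
  move=> x; apply: cvgD; first exact: cvg_id.
  have HH := (sum_cont _ _ (index_enum 'I_K) H (fun i => hf_cont _ (lam i) (gu i) (gd i) (gtu i) (gtd i) (m i)) x). exact HH.
have Hpos : forall i L, 0 <= L -> 0 <= H i L.
  by move=> i L hL; have [] := hf_spec (hlam i) (hgu i) (hgd i) (hgtu i) (hgtd i) (hm i) hL.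
have G0 : G 0 = 0.
  rewrite /G add0r big1 // => i _; exact: hf0.
have GS : S <= G S.
  by rewrite /G lerDl; apply: sumr_ge0 => i _; apply: Hpos.
have [L LS GL] : exists2 L, L \in `[0, S] & G L = S.
  apply: IVT => //; first exact: continuous_subspaceT.
  rewrite G0 (min_l (le_trans S0 GS)) (max_r (le_trans S0 GS)) S0 GS //.
have L0 : 0 <= L by move: LS; rewrite in_itv /= => /andP[].
pose o i := gd i * m i / (lam i * H i L + gu i + gd i).
have den : forall i, 0 < lam i * H i L + gu i + gd i.
  move=> i; have := Hpos i L L0; have := hlam i; have := hgu i; have := hgd i; nra.
have eo : forall i, o i * (lam i * H i L + gu i + gd i) = gd i * m i.
  by move=> i; rewrite /o -mulrA mulVf ?mulr1 // gt_eqF.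
pose mu (z : state K) := match z with
  | st_ln => L | st_hn i => H i L | st_ho i => m i - o i | st_lo i => o i end.
have P : is_steady_state lam gu gd gtu gtd m mu.
  have o0 : forall i, 0 <= o i.
    move=> i; rewrite /o; apply: divr_ge0; last exact: ltW (den i).
    by apply: mulr_ge0; apply: ltW.
  have om : forall i, o i <= m i.
    move=> i; rewrite /o ler_pdivrMr ?den //.
    have a1 : 0 <= m i * (lam i * H i L).
      by apply: mulr_ge0; [apply: ltW|apply: mulr_ge0 => //; [apply: ltW|apply: Hpos]].
    have a2 : 0 <= m i * gu i by apply: mulr_ge0; apply: ltW.
    rewrite !mulrDr; lra.
  split; first by case=> [| i | i | i] /=; rewrite ?subr_ge0 //; first [apply: Hpos | apply: om | apply: o0].
  split.
    move=> i /=; have [_ Q] := hf_spec (hlam i) (hgu i) (hgd i) (hgtu i) (hgtd i) (hm i) L0.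
    rewrite -/(H i L) in Q.
    have := eo i; have := den i; have := hgd i; have := hgu i; nra.
  split; first by move=> i /=; have := eo i; nra.
  split; first by move=> i /=; rewrite subrK.
  move: GL; rewrite /G /S /= => GL; lra.
exists mu; split => // mu' P'.
have [le|le] := leP (mu (st_ln K)) (mu' (st_ln K)).
  exact: (uniq_le hlam hgu hgd hgtu hgtd hm P P' le).
symmetry; exact: (uniq_le hlam hgu hgd hgtu hgtd hm P' P (ltW le)).
Qed.
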